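(* There is no countable graph $U$ such that $U$ has no $K_\infty$ minor and every countable graph with no $K_\infty$ minor is a minor of $U$.
   Context: Graphs may be infinite. $K_\infty$ denotes the complete graph on countably infinitely many vertices. A graph $H$ is a minor of a graph $G$ (written $H<G$) if there are pairwise disjoint connected subgraphs $B_v\subseteq G$, $v\in V(H)$ (branch sets), and for every edge $uv\in E(H)$ an edge of $G$ with one endvertex in $B_u$ and the other in $B_v$. A graph is $K_\infty$-minor-free if $K_\infty$ is not a minor of it. *)

(* Defs.v *)
From Stdlib Require Import Relations Relation_Operators.

Record graph := Graph {
  vertex : Type;
  adj : vertex -> vertex -> Prop;
  adj_sym : forall x y, adj x y -> adj y x;
  adj_irrefl : forall x, ~ adj x x
}.

(* countable = finite or countably infinite: injects into nat *)
Definition countable (G : graph) : Prop :=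
  exists f : vertex G -> nat, forall x y, f x = f y -> x = y.

(* adjacency restricted to a vertex set B (the induced subgraph G[B]) *)
Definition adj_in (G : graph) (B : vertex G -> Prop) : vertex G -> vertex G -> Prop :=
  fun x y => B x /\ B y /\ adj G x y.

Definition connected_set (G : graph) (B : vertex G -> Prop) : Prop :=
  (exists x, B x) /\
  forall x y, B x -> B y -> clos_refl_trans (vertex G) (adj_in G B) x y.

Definition minor (H G : graph) : Prop :=
  exists B : vertex H -> vertex G -> Prop,
    (forall v, connected_set G (B v)) /\
    (forall u v x, u <> v -> B u x -> B v x -> False) /\
    (forall u v, adj H u v -> exists x y, B u x /\ B v y /\ adj G x y).

Lemma Kinf_sym : forall x y : nat, x <> y -> y <> x.
Proof. intros x y H E; apply H; symmetry; exact E. Qed.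
Lemma Kinf_irrefl : forall x : nat, ~ (x <> x).
Proof. intros x H; apply H; reflexivity. Qed.
Definition K_inf : graph := Graph nat (fun x y => x <> y) Kinf_sym Kinf_irrefl.

Definition Kinf_minor_free (G : graph) : Prop := ~ minor K_inf G.

(* Main.v *)
Require Import Defs.
From Stdlib Require Import List Arith Lia Relations Relation_Operators Classical ClassicalEpsilon.
From Stdlib Require Cantor.
Import ListNotations.

Definition prefix {X} (s t : list X) : Prop := exists r, t = s ++ r.

Lemma prefix_refl {X} (s : list X) : prefix s s.
Proof. exists []. now rewrite app_nil_r. Qed.

Lemma prefix_trans {X} (a b c : list X) : prefix a b -> prefix b c -> prefix a c.
Proof. intros [r ->] [r' ->]. exists (r ++ r'). now rewrite app_assoc. Qed.

Lemma prefix_len {X} (a b : list X) : prefix a b -> length a <= length b.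
Proof. intros [r ->]. rewrite length_app. lia. Qed.

Lemma prefix_eq {X} (a b : list X) : prefix a b -> length b <= length a -> a = b.
Proof.
  intros [r ->] H. rewrite length_app in H.
  destruct r. now rewrite app_nil_r. simpl in H. lia.
Qed.

Lemma prefix_nil {X} (a : list X) : prefix [] a.
Proof. now exists a. Qed.

Lemma prefix_common {X} (a b c : list X) : prefix a c -> prefix b c -> prefix a b \/ prefix b a.
Proof.
  intros [r ->] [r' E]. revert b E. induction a as [|x a IH]; intros b E.
  - left. apply prefix_nil.
  - destruct b as [|y b]. right. apply prefix_nil.
    simpl in E. injection E as -> E.
    destruct (IH b E) as [[s ->]|[s ->]]; [left|right]; exists s; reflexivity.
Qed.

Lemma prefix_firstn {X} (s : list X) k : prefix (firstn k s) s.
Proof. exists (skipn k s). now rewrite firstn_skipn. Qed.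

Lemma prefix_firstn2 {X} (s : list X) i j : i <= j -> prefix (firstn i s) (firstn j s).
Proof.
  intros H. exists (skipn i (firstn j s)).
  rewrite <- (firstn_skipn i (firstn j s)) at 1. rewrite firstn_firstn.
  now rewrite Nat.min_l.
Qed.

Lemma crt_mono (G : graph) (P Q : vertex G -> Prop) x y :
  (forall u, P u -> Q u) -> clos_refl_trans _ (adj_in G P) x y -> clos_refl_trans _ (adj_in G Q) x y.
Proof.
  intros HPQ H. induction H.
  - apply rt_step. destruct H as [? [? ?]]. split; auto.
  - apply rt_refl.
  - eapply rt_trans; eauto.
Qed.

Lemma crt_sym (G : graph) (P : vertex G -> Prop) x y :
  clos_refl_trans _ (adj_in G P) x y -> clos_refl_trans _ (adj_in G P) y x.
Proof.
  intros H. induction H.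
  - apply rt_step. destruct H as [? [? ?]]. split; [|split]; auto. now apply adj_sym.
  - apply rt_refl.
  - eapply rt_trans; eauto.
Qed.

Lemma crt_list (G : graph) (P : vertex G -> Prop) a b :
  clos_refl_trans _ (adj_in G P) a b -> P a ->
  exists l, (forall u, In u l -> P u) /\ In b l /\
    forall u, In u l -> clos_refl_trans _ (adj_in G (fun w => In w l)) a u.
Proof.
  intros H Pa. apply clos_rt_rtn1 in H. induction H as [|y z Hyz Hr IH].
  - exists [a]. split; [|split].
    + intros u [<-|[]]; auto.
    + now left.
    + intros u [<-|[]]. apply rt_refl.
  - destruct IH as [l [H1 [H2 H3]]].
    exists (z :: l). destruct Hyz as [Py [Pz Ayz]]. split; [|split].
    + intros u [<-|Hu]; auto.
    + now left.
    + intros u [<-|Hu].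
      * eapply rt_trans. eapply crt_mono; [|apply H3; exact H2]. intros; now right.
        apply rt_step. split; [now right|split; [now left|exact Ayz]].
      * eapply crt_mono; [|apply H3; exact Hu]. intros; now right.
Qed.

Lemma min_exists {X} (P : list X -> Prop) : (exists x, P x) ->
  exists x, P x /\ forall y, P y -> length x <= length y.
Proof.
  intros [x Px].
  remember (length x) as n. revert x Px Heqn.
  induction n as [n IH] using lt_wf_ind. intros x Px En.
  destruct (classic (exists y, P y /\ length y < length x)) as [[y [Py Ly]]|N].
  - eapply (IH (length y)); eauto; lia.
  - exists x. split; auto. intros y Py. apply NNPP. intros C. apply N. exists y. split; auto. lia.
Qed.
Section Gen.
Variable U : graph.

Definition node := list (list (nat * vertex U)).
Definition A (i : nat) (q : node) (u : vertex U) : Prop := exists st, In st q /\ In (i, u) st.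

Definition full (q : node) : Prop :=
  (forall i, i < length q -> exists u, A i q u) /\
  (forall i u v, i < length q -> A i q u -> A i q v ->
      clos_refl_trans _ (adj_in U (A i q)) u v) /\
  (forall i j u, i < length q -> j < length q -> i <> j -> A i q u -> A j q u -> False) /\
  (forall i j, i < length q -> j < length q -> i <> j ->
      exists x y, A i q x /\ A j q y /\ adj U x y).

Definition good (q : node) : Prop := forall p, prefix p q -> full p.

Lemma A_mono i p q u : prefix p q -> A i p u -> A i q u.
Proof. intros [r ->] [st [H1 H2]]. exists st. split; auto. apply in_or_app; now left. Qed.

Lemma good_prefix p q : prefix p q -> good q -> good p.
Proof. intros H Hq r Hr. apply Hq. eapply prefix_trans; eauto. Qed.

Lemma good_full q : good q -> full q.
Proof. intros H. apply H, prefix_refl. Qed.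

Lemma full_nil : full [].
Proof. repeat split; intros; simpl in *; lia. Qed.

Lemma good_nil : good [].
Proof. intros p [r E]. destruct p; [apply full_nil|discriminate]. Qed.

Lemma chain_minor (c : nat -> node) :
  (forall k, full (c k)) -> (forall k, prefix (c k) (c (S k))) -> (forall k, k <= length (c k)) ->
  minor K_inf U.
Proof.
  intros Hf Hp Hl.
  assert (Hpm : forall n m, n <= m -> prefix (c n) (c m)).
  { intros n m H. induction H. apply prefix_refl. eapply prefix_trans; eauto. }
  exists (fun i u => exists n, A i (c n) u). split; [|split].
  - intros i. split.
    + destruct (proj1 (Hf (S i)) i) as [u Hu]. specialize (Hl (S i)). lia.
      exists u, (S i). exact Hu.
    + intros x y [n Hx] [m Hy]. set (N := max n (max m (S i))).
      assert (HN : S i <= length (c N)) by (specialize (Hl N); lia).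
      eapply crt_mono; [|apply (proj1 (proj2 (Hf N))) with (i := i)]; [| lia | |].
      * intros w Hw. now exists N.
      * eapply A_mono; [|exact Hx]. apply Hpm. lia.
      * eapply A_mono; [|exact Hy]. apply Hpm. lia.
  - intros u v x Huv [n Hx] [m Hy]. set (N := max n (max m (max (S u) (S v)))).
    assert (HN : max (S u) (S v) <= length (c N)) by (specialize (Hl N); lia).
    apply (proj1 (proj2 (proj2 (Hf N))) u v x); [lia|lia|exact Huv| |].
    + eapply A_mono; [|exact Hx]. apply Hpm. lia.
    + eapply A_mono; [|exact Hy]. apply Hpm. lia.
  - intros u v Huv. simpl in Huv. set (N := S (max u v)).
    assert (HN : N <= length (c N)) by apply Hl.
    destruct (proj2 (proj2 (proj2 (Hf N))) u v) as [x [y [H1 [H2 H3]]]]; [lia|lia|exact Huv|].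
    exists x, y. split; [exists N; exact H1|split; [exists N; exact H2|exact H3]].
Qed.

Definition adjG (s t : node) : Prop := good s /\ good t /\ s <> t /\ (prefix s t \/ prefix t s).

Lemma adjG_sym s t : adjG s t -> adjG t s.
Proof. intros [H1 [H2 [H3 H]]]. split; [exact H2|split; [exact H1|split]]. intros E; apply H3; now rewrite E. tauto. Qed.

Lemma adjG_irrefl s : ~ adjG s s.
Proof. intros [_ [_ [H _]]]. now apply H. Qed.

Definition Gr : graph := Graph node adjG adjG_sym adjG_irrefl.

Lemma minor_pred_prefix (B : vertex Gr -> Prop) m x :
  connected_set Gr B -> B m -> B x -> (forall y, B y -> length m <= length y) -> prefix m x.
Proof.
  intros [_ Hc] Bm Bx Hmin. specialize (Hc m x Bm Bx).
  apply clos_rt_rtn1 in Hc. induction Hc as [|y z Hyz Hr IH].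
  - apply prefix_refl.
  - destruct Hyz as [By [Bz [_ [_ [_ [Hp|Hp]]]]]].
    + eapply prefix_trans; [apply IH|]; auto.
    + destruct (prefix_common m z y (IH By) Hp) as [H|H]; auto.
      rewrite (prefix_eq z m H). apply prefix_refl. apply Hmin; auto.
Qed.

Lemma Gr_free : ~ minor K_inf U -> Kinf_minor_free Gr.
Proof.
  intros HU [B [Hc [Hd He]]].
  assert (Hex : forall i, exists x, B i x /\ forall y, B i y -> length x <= length y).
  { intros i. apply min_exists. apply (Hc i). }
  set (m := fun i => proj1_sig (constructive_indefinite_description _ (Hex i))).
  assert (Hm : forall i, B i (m i) /\ forall y, B i y -> length (m i) <= length y).
  { intros i. exact (proj2_sig (constructive_indefinite_description _ (Hex i))). }
  assert (Hpre : forall i x, B i x -> prefix (m i) x).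
  { intros i x Bx. eapply minor_pred_prefix; eauto; apply Hm. }
  assert (Hcmp : forall i j, i <> j -> good (m i) /\ (prefix (m i) (m j) \/ prefix (m j) (m i))).
  { intros i j Hij. destruct (He i j Hij) as [x [y [Bx [By [Gx [Gy [_ Hxy]]]]]]].
    pose proof (Hpre i x Bx) as Pi. pose proof (Hpre j y By) as Pj.
    split. eapply good_prefix; eauto.
    destruct Hxy as [Hxy|Hxy].
    - apply (prefix_common _ _ y); auto. eapply prefix_trans; eauto.
    - apply (prefix_common _ _ x); auto. eapply prefix_trans; eauto. }
  assert (Hneq : forall i j, i <> j -> m i <> m j).
  { intros i j Hij E. apply (Hd i j (m i) Hij (proj1 (Hm i))). rewrite E. apply Hm. }
  assert (Hinj : forall i j, length (m i) = length (m j) -> i = j).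
  { intros i j E. destruct (Nat.eq_dec i j) as [|Hij]; auto. exfalso.
    apply (Hneq i j Hij). destruct (proj2 (Hcmp i j Hij)) as [H|H].
    apply prefix_eq; auto; lia. symmetry; apply prefix_eq; auto; lia. }
  assert (Hunb : forall L, exists i, L < length (m i)).
  { intros L. apply NNPP. intros N.
    assert (Hle : forall i, length (m i) <= L).
    { intros i. destruct (Nat.le_gt_cases (length (m i)) L) as [|C]; auto. exfalso. apply N. exists i. exact C. }
    assert (ND : NoDup (map (fun i => length (m i)) (seq 0 (S (S L))))).
    { apply NoDup_map_NoDup_ForallPairs. intros a b _ _. apply Hinj. apply seq_NoDup. }
    apply NoDup_incl_length with (l' := seq 0 (S L)) in ND.
    - rewrite length_map, !length_seq in ND. lia.
    - intros a Ha. apply in_map_iff in Ha as [i [<- _]]. apply in_seq. specialize (Hle i). lia. }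
  set (g := fun L => proj1_sig (constructive_indefinite_description _ (Hunb L))).
  assert (Hg : forall L, L < length (m (g L))).
  { intros L. exact (proj2_sig (constructive_indefinite_description _ (Hunb L))). }
  set (idx := fix idx k := match k with 0 => 0 | S k => g (length (m (idx k))) end).
  set (c := fun k => m (idx k)).
  apply HU. apply (chain_minor c).
  - intros k. apply good_full. apply (Hcmp _ (S (idx k))). lia.
  - intros k. unfold c. simpl. pose proof (Hg (length (m (idx k)))) as H.
    assert (Hij : idx k <> g (length (m (idx k)))). { intros E. rewrite <- E in H. lia. }
    destruct (proj2 (Hcmp _ _ Hij)) as [P|P]; auto.
    apply prefix_len in P. lia.
  - induction k. lia. unfold c in *. simpl. pose proof (Hg (length (m (idx k)))). lia.
Qed.

Fixpoint encl {X} (e : X -> nat) (l : list X) : nat :=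
  match l with [] => 0 | x :: l => S (Cantor.to_nat (e x, encl e l)) end.

Lemma encl_inj {X} (e : X -> nat) : (forall x y, e x = e y -> x = y) ->
  forall l l', encl e l = encl e l' -> l = l'.
Proof.
  intros He l. induction l as [|x l IH]; intros [|y l'] E; cbn [encl] in E; try discriminate; auto.
  apply eq_add_S in E. apply (f_equal Cantor.of_nat) in E. rewrite !Cantor.cancel_of_to in E.
  injection E as E1 E2. f_equal; auto.
Qed.

Lemma Gr_countable : countable U -> countable Gr.
Proof.
  intros [f Hf].
  exists (encl (encl (fun p : nat * vertex U => Cantor.to_nat (fst p, f (snd p))))).
  apply encl_inj, encl_inj. intros [a x] [b y] E. cbn [fst snd] in E.
  apply (f_equal Cantor.of_nat) in E. rewrite !Cantor.cancel_of_to in E.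
  injection E as -> E. f_equal; auto.
Qed.

End Gen.
Section Phi.
Variable U : graph.
Variable B0 : node U -> vertex U -> Prop.
Hypothesis Hconn : forall v, connected_set U (B0 v).
Hypothesis Hdisj : forall u v x, u <> v -> B0 u x -> B0 v x -> False.
Hypothesis Hedge : forall u v, adjG U u v -> exists x y, B0 u x /\ B0 v y /\ adj U x y.
Variable d : vertex U.

Definition bpt (t : node U) : vertex U := epsilon (inhabits d) (fun u => B0 t u).
Definition E (a b : node U) : vertex U * vertex U :=
  epsilon (inhabits (d, d)) (fun p => B0 a (fst p) /\ B0 b (snd p) /\ adj U (fst p) (snd p)).
Definition pathP (t : node U) (x : vertex U) (l : list (vertex U)) : Prop :=
  (forall u, In u l -> B0 t u) /\ In x l /\
  forall u, In u l -> clos_refl_trans _ (adj_in U (fun w => In w l)) (bpt t) u.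
Definition path (t : node U) (x : vertex U) : list (vertex U) :=
  epsilon (inhabits []) (pathP t x).

Definition step (q : node U) : list (nat * vertex U) :=
  (length q, bpt q) :: flat_map (fun i =>
     map (fun w => (i, w)) (path (firstn i q) (fst (E (firstn i q) q))) ++
     map (fun w => (length q, w)) (path q (snd (E (firstn i q) q)))) (seq 0 (length q)).

Definition phi (s : node U) : node U := map (fun j => step (firstn j s)) (seq 0 (S (length s))).

Lemma bpt_spec t : B0 t (bpt t).
Proof. unfold bpt. apply epsilon_spec. apply (Hconn t). Qed.

Lemma E_spec a b : adjG U a b -> B0 a (fst (E a b)) /\ B0 b (snd (E a b)) /\ adj U (fst (E a b)) (snd (E a b)).
Proof.
  intros H. unfold E. apply epsilon_spec. destruct (Hedge a b H) as [x [y H']]. now exists (x, y).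
Qed.

Lemma path_spec t x : B0 t x -> pathP t x (path t x).
Proof.
  intros Hx. unfold path. apply epsilon_spec.
  apply crt_list. apply (proj2 (Hconn t)); auto. apply bpt_spec. apply bpt_spec.
Qed.

Lemma length_phi s : length (phi s) = S (length s).
Proof. unfold phi. now rewrite length_map, length_seq. Qed.

Lemma phi_prefix s t : prefix s t -> prefix (phi s) (phi t).
Proof.
  intros [r ->]. unfold phi. rewrite length_app.
  replace (S (length s + length r)) with (S (length s) + length r) by lia.
  rewrite seq_app, map_app. eexists. f_equal.
  apply map_ext_in. intros j Hj. apply in_seq in Hj.
  rewrite firstn_app. replace (j - length s) with 0 by lia. now rewrite firstn_0, app_nil_r.
Qed.

Lemma prefix_phi_inv p s : prefix p (phi s) -> p = [] \/ exists t, prefix t s /\ p = phi t.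
Proof.
  intros Hp. destruct p as [|x p']. now left. right.
  set (k := length p'). exists (firstn k s). split. apply prefix_firstn.
  pose proof (prefix_len _ _ Hp) as L. rewrite length_phi in L. simpl in L.
  pose proof (phi_prefix _ _ (prefix_firstn s k)) as H2.
  assert (Lk : length (firstn k s) = k) by (apply firstn_length_le; unfold k; lia).
  destruct (prefix_common _ _ _ Hp H2) as [H|H].
  - apply prefix_eq; auto. rewrite length_phi, Lk. simpl. unfold k. lia.
  - symmetry. apply prefix_eq; auto. rewrite length_phi, Lk. simpl. unfold k. lia.
Qed.

Lemma adjG_firstn s i j : good U s -> i < j -> j <= length s -> adjG U (firstn i s) (firstn j s).
Proof.
  intros Hs Hij Hj. split; [|split; [|split]].
  - eapply good_prefix; [apply prefix_firstn|exact Hs].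
  - eapply good_prefix; [apply prefix_firstn|exact Hs].
  - intros Eq. apply (f_equal (@length _)) in Eq. rewrite !firstn_length_le in Eq; lia.
  - left. apply prefix_firstn2. lia.
Qed.

Lemma In_step_chunk s j i u : good U s -> j <= length s -> In (i, u) (step (firstn j s)) ->
  i <= j /\ exists l, In u l /\ (forall w, In w l -> In (i, w) (step (firstn j s))) /\
    (forall w, In w l -> B0 (firstn i s) w) /\
    (forall w, In w l -> clos_refl_trans _ (adj_in U (fun w => In w l)) (bpt (firstn i s)) w).
Proof.
  intros Hs Hj Hin.
  assert (Lq : length (firstn j s) = j) by (apply firstn_length_le; lia).
  destruct Hin as [Eq|Hin].
  - rewrite Lq in Eq. injection Eq as <- <-. split; [lia|].
    exists [bpt (firstn j s)]. split; [now left|split; [|split]].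
    + intros w [<-|[]]. unfold step. rewrite Lq. now left.
    + intros w [<-|[]]. apply bpt_spec.
    + intros w [<-|[]]. apply rt_refl.
  - apply in_flat_map in Hin as [i0 [Hi0 Hin]]. rewrite Lq in Hi0. apply in_seq in Hi0.
    assert (Hff : firstn i0 (firstn j s) = firstn i0 s) by (rewrite firstn_firstn; f_equal; lia).
    pose proof (E_spec _ _ (adjG_firstn s i0 j Hs ltac:(lia) Hj)) as [EA [EB EC]].
    rewrite <- Hff in EA.
    apply in_app_or in Hin as [Hin|Hin]; apply in_map_iff in Hin as [w0 [Eq Hw0]]; injection Eq as <- <-.
    + split; [lia|]. pose proof (path_spec _ _ EA) as [P1 [P2 P3]].
      eexists. split; [exact Hw0|split; [|split; [rewrite <- Hff; exact P1|rewrite <- Hff; exact P3]]].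
      intros w Hw. right. apply in_flat_map. exists i0. split. rewrite Lq. apply in_seq. lia.
      apply in_or_app. left. apply in_map_iff. exists w. split; auto.
    + rewrite Lq. split; [lia|]. pose proof (path_spec _ _ EB) as [P1 [P2 P3]]. rewrite Hff in Hw0.
      eexists. split; [exact Hw0|split; [|split; [exact P1|exact P3]]].
      intros w Hw. right. apply in_flat_map. exists i0. split. rewrite Lq. apply in_seq. lia.
      apply in_or_app. right. apply in_map_iff. exists w. rewrite Lq. split; [reflexivity|rewrite Hff; exact Hw].
Qed.

Lemma A_phi i s u : A U i (phi s) u <-> exists j, j <= length s /\ In (i, u) (step (firstn j s)).
Proof.
  split.
  - intros [st [H1 H2]]. unfold phi in H1. apply in_map_iff in H1 as [j [<- Hj]].
    apply in_seq in Hj. exists j. split; auto; lia.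
  - intros [j [Hj H]]. exists (step (firstn j s)). split; auto.
    unfold phi. apply in_map_iff. exists j. split; auto. apply in_seq. lia.
Qed.

Lemma A_phi_chunk i s u : good U s -> A U i (phi s) u ->
  i <= length s /\ B0 (firstn i s) u /\
  clos_refl_trans _ (adj_in U (A U i (phi s))) (bpt (firstn i s)) u.
Proof.
  intros Hs Hu. apply A_phi in Hu as [j [Hj Hin]].
  destruct (In_step_chunk s j i u Hs Hj Hin) as [Hij [l [H1 [H2 [H3 H4]]]]].
  split; [lia|split; auto].
  eapply crt_mono; [|apply H4; exact H1].
  intros w Hw. apply A_phi. exists j. split; auto.
Qed.

Lemma full_phi s : good U s -> full U (phi s).
Proof.
  intros Hs. unfold full. rewrite length_phi. split; [|split; [|split]].
  - intros i Hi. exists (bpt (firstn i s)). apply A_phi. exists i. split; [lia|].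
    unfold step. rewrite firstn_length_le by lia. now left.
  - intros i u v Hi Hu Hv.
    destruct (A_phi_chunk i s u Hs Hu) as [_ [_ Cu]].
    destruct (A_phi_chunk i s v Hs Hv) as [_ [_ Cv]].
    eapply rt_trans; [apply crt_sym; exact Cu|exact Cv].
  - intros i j u Hi Hj Hij Hu Hv.
    destruct (A_phi_chunk i s u Hs Hu) as [_ [Bu _]].
    destruct (A_phi_chunk j s u Hs Hv) as [_ [Bv _]].
    assert (Hne : firstn i s <> firstn j s).
    { intros Eq. apply (f_equal (@length _)) in Eq. rewrite !firstn_length_le in Eq; lia. }
    apply (Hdisj _ _ u Hne Bu Bv).
  - assert (Hlt : forall i j, i < j -> j < S (length s) ->
       exists x y, A U i (phi s) x /\ A U j (phi s) y /\ adj U x y).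
    { intros i j Hij Hj.
      assert (Lq : length (firstn j s) = j) by (apply firstn_length_le; lia).
      assert (Hff : firstn i (firstn j s) = firstn i s) by (rewrite firstn_firstn; f_equal; lia).
      pose proof (E_spec _ _ (adjG_firstn s i j Hs Hij ltac:(lia))) as [EA [EB EC]].
      rewrite <- Hff in EA, EC, EB.
      pose proof (path_spec _ _ EA) as [_ [PA _]].
      pose proof (path_spec _ _ EB) as [_ [PB _]].
      eexists; eexists; split; [|split; [|exact EC]]; apply A_phi; exists j; (split; [lia|]); right;
        apply in_flat_map; exists i; (split; [rewrite Lq; apply in_seq; lia|]); apply in_or_app.
      + left. apply in_map_iff. eexists. split; [reflexivity|exact PA].
      + right. apply in_map_iff. eexists. rewrite Lq. split; [reflexivity|exact PB]. }
    intros i j Hi Hj Hij. destruct (Nat.lt_trichotomy i j) as [H|[H|H]].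
    + apply Hlt; auto.
    + contradiction.
    + destruct (Hlt j i H Hi) as [x [y [H1 [H2 H3]]]]. exists y, x. split; auto. split; auto. now apply adj_sym.
Qed.

Lemma good_phi s : good U s -> good U (phi s).
Proof.
  intros Hs p Hp. destruct (prefix_phi_inv p s Hp) as [->|[t [Ht ->]]].
  - apply full_nil.
  - apply full_phi. eapply good_prefix; eauto.
Qed.

Fixpoint iter_phi (n : nat) : node U := match n with 0 => [] | S n => phi (iter_phi n) end.

Lemma phi_chain : minor K_inf U.
Proof.
  apply (chain_minor U iter_phi).
  - intros k. apply good_full. induction k. apply good_nil. now apply good_phi.
  - induction k. apply prefix_nil. simpl. now apply phi_prefix.
  - induction k. simpl; lia. change (S k <= length (phi (iter_phi k))). rewrite length_phi. lia.
Qed.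

End Phi.

Theorem theorem1p3 :
  ~ exists U : graph,
      countable U /\ Kinf_minor_free U /\
      forall G : graph, countable G -> Kinf_minor_free G -> minor G U.
Proof.
  intros [U [cU [fU univ]]].
  destruct (univ (Gr U) (Gr_countable U cU) (Gr_free U fU)) as [B0 [Hc [Hd He]]].
  destruct (proj1 (Hc [])) as [d _].
  apply fU. exact (phi_chain U B0 Hc Hd He d).
Qed.
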